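(* Let $\gamma>1$ and let $(v,\tau,p)$ be a $C^2$ solution with $\tau>0$, $p>0$ of the system $$\partial_t v+v\partial_x v+\tau\partial_x p=0,\qquad \partial_t\tau+v\partial_x\tau-\tau\partial_x v=0,\qquad \partial_t p+v\partial_x p+\gamma p\,\partial_x v=0 .$$ Set $s=\sqrt{\gamma p/\tau}$, $\xi_1=v-\sqrt{\gamma p\tau}$, $\xi_2=v$, $\xi_3=v+\sqrt{\gamma p\tau}$, and $$\mathcal P_1=\partial_x v-\frac{\partial_x p}{s},\qquad \mathcal P_2=s\,\partial_x\tau+\frac{\partial_x p}{s},\qquad \mathcal P_3=\partial_x v+\frac{\partial_x p}{s}.$$ Then $\partial_t\mathcal P_k+\xi_k\partial_x\mathcal P_k=\mathbf F_k(\mathcal P_1,\mathcal P_2,\mathcal P_3)$ for $k=1,2,3$, where $$\mathbf F_1=-\tfrac{\gamma+1}{4}\mathcal P_1^2+\tfrac14\mathcal P_1\mathcal P_2-\tfrac{3-\gamma}{4}\mathcal P_1\mathcal P_3-\tfrac14\mathcal P_2\mathcal P_3,$$ $$\mathbf F_2=-\tfrac{\gamma+1}{4}\mathcal P_2(\mathcal P_1+\mathcal P_3),$$ $$\mathbf F_3=-\tfrac{\gamma+1}{4}\mathcal P_3^2+\tfrac14\mathcal P_1\mathcal P_2-\tfrac{3-\gamma}{4}\mathcal P_1\mathcal P_3-\tfrac14\mathcal P_2\mathcal P_3 .$$ In particular the right-hand sides are quadratic polynomials in $(\mathcal P_1,\mathcal P_2,\mathcal P_3)$ with constant coefficients, independent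 of $(v,\tau,p)$.
   Context: Here $v$ is velocity, $\tau=1/\rho$ is specific volume and $p$ is pressure of a polytropic gas with adiabatic exponent $\gamma$; the system is the 1D non-isentropic Euler system written in these variables. The $\xi_k$ are the eigenvalues of the system's coefficient matrix and $\mathcal P_k=l^k\cdot\partial_x(v,\tau,p)$ with left eigenvectors $l^1=(1,0,-s^{-1})$, $l^2=(0,s,s^{-1})$, $l^3=(1,0,s^{-1})$. *)

(* Defs.v *)
From Stdlib Require Export Reals.
Open Scope R_scope.

Definition open2 (U : R -> R -> Prop) : Prop :=
  forall t x, U t x -> exists r, 0 < r /\
    forall t' x', Rabs (t' - t) < r -> Rabs (x' - x) < r -> U t' x'.

Definition cont_on (U : R -> R -> Prop) (f : R -> R -> R) : Prop :=
  forall t x, U t x -> forall eps, 0 < eps -> exists delta, 0 < delta /\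
    forall t' x', Rabs (t' - t) < delta -> Rabs (x' - x) < delta ->
      Rabs (f t' x' - f t x) < eps.

Definition partial_t_on (U : R -> R -> Prop) (f ft : R -> R -> R) : Prop :=
  forall t x, U t x -> derivable_pt_lim (fun s => f s x) t (ft t x).

Definition partial_x_on (U : R -> R -> Prop) (f fx : R -> R -> R) : Prop :=
  forall t x, U t x -> derivable_pt_lim (fun y => f t y) x (fx t x).

Definition C2_on (U : R -> R -> Prop) (f : R -> R -> R) : Prop :=
  exists ft fx ftt ftx fxt fxx : R -> R -> R,
    partial_t_on U f ft /\ partial_x_on U f fx /\
    partial_t_on U ft ftt /\ partial_x_on U ft ftx /\
    partial_t_on U fx fxt /\ partial_x_on U fx fxx /\
    cont_on U f /\ cont_on U ft /\ cont_on U fx /\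
    cont_on U ftt /\ cont_on U ftx /\ cont_on U fxt /\ cont_on U fxx.

Definition sfun (gamma tau p : R) : R := sqrt (gamma * p / tau).

Definition xi1 (gamma v tau p : R) : R := v - sqrt (gamma * p * tau).
Definition xi2 (gamma v tau p : R) : R := v.
Definition xi3 (gamma v tau p : R) : R := v + sqrt (gamma * p * tau).

Definition P1 (gamma tau p vx taux px : R) : R := vx - px / sfun gamma tau p.
Definition P2 (gamma tau p vx taux px : R) : R :=
  sfun gamma tau p * taux + px / sfun gamma tau p.
Definition P3 (gamma tau p vx taux px : R) : R := vx + px / sfun gamma tau p.

Definition F1 (gamma a b c : R) : R :=
  - ((gamma + 1) / 4) * a ^ 2 + (1 / 4) * a * b
  - ((3 - gamma) / 4) * a * c - (1 / 4) * b * c.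
Definition F2 (gamma a b c : R) : R :=
  - ((gamma + 1) / 4) * b * (a + c).
Definition F3 (gamma a b c : R) : R :=
  - ((gamma + 1) / 4) * c ^ 2 + (1 / 4) * a * b
  - ((3 - gamma) / 4) * a * c - (1 / 4) * b * c.

(* Main.v *)
Require Import Defs.
From Stdlib Require Import Reals Lra.
Open Scope R_scope.

Notation dpl := derivable_pt_lim.

Lemma D_eq f x a b : dpl f x a -> a = b -> dpl f x b.
Proof. intros H ->; exact H. Qed.
Lemma D_plus f g x a b : dpl f x a -> dpl g x b -> dpl (fun y => f y + g y) x (a+b).
Proof. intros; apply (derivable_pt_lim_plus f g); auto. Qed.
Lemma D_minus f g x a b : dpl f x a -> dpl g x b -> dpl (fun y => f y - g y) x (a-b).
Proof. intros; apply (derivable_pt_lim_minus f g); auto. Qed.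
Lemma D_mult f g x a b : dpl f x a -> dpl g x b -> dpl (fun y => f y * g y) x (a * g x + f x * b).
Proof. intros; apply (derivable_pt_lim_mult f g); auto. Qed.
Lemma D_div f g x a b : dpl f x a -> dpl g x b -> g x <> 0 ->
  dpl (fun y => f y / g y) x ((a * g x - b * f x) / (g x)²).
Proof. intros; apply (derivable_pt_lim_div f g); auto. Qed.
Lemma D_const c x : dpl (fun _ => c) x 0.
Proof. apply (derivable_pt_lim_const c). Qed.
Lemma D_sqrt f x a : 0 < f x -> dpl f x a -> dpl (fun y => sqrt (f y)) x (/ (2 * sqrt (f x)) * a).
Proof. intros H1 H2. apply (derivable_pt_lim_comp f sqrt); auto. apply derivable_pt_lim_sqrt; auto. Qed.

Definition Sd g T P T' P' := (g * P' * T - T' * (g * P)) / T^2 / (2 * sfun g T P).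

Lemma dS g T P T' P' z : 0 < g -> 0 < T z -> 0 < P z -> dpl T z T' -> dpl P z P' ->
  dpl (fun y => sfun g (T y) (P y)) z (Sd g (T z) (P z) T' P').
Proof.
  intros Hg HT HP dT dP. unfold sfun, Sd.
  eapply D_eq. apply D_sqrt.
  - apply Rdiv_lt_0_compat; auto. apply Rmult_lt_0_compat; auto.
  - apply D_div; [ | exact dT | lra]. eapply D_eq. apply D_mult. apply D_const. exact dP. reflexivity.
  - assert (0 < sqrt (g * P z / T z)). apply sqrt_lt_R0. apply Rdiv_lt_0_compat; auto. apply Rmult_lt_0_compat; auto.
    unfold Rsqr. unfold sfun. set (q := sqrt _) in *. field. split; lra.
Qed.

Lemma S_pos g T P : 0 < g -> 0 < T -> 0 < P -> 0 < sfun g T P.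
Proof. intros. unfold sfun. apply sqrt_lt_R0. apply Rdiv_lt_0_compat; auto. apply Rmult_lt_0_compat; auto. Qed.

Lemma dQ g T P C T' P' C' z : 0 < g -> 0 < T z -> 0 < P z -> dpl T z T' -> dpl P z P' -> dpl C z C' ->
  dpl (fun y => C y / sfun g (T y) (P y)) z
   ((C' * sfun g (T z) (P z) - Sd g (T z) (P z) T' P' * C z) / (sfun g (T z) (P z))^2).
Proof.
  intros. eapply D_eq. apply D_div; [eassumption | apply dS; eauto | ].
  pose proof (S_pos g (T z) (P z)). lra. cbv beta. unfold Rsqr. field. pose proof (S_pos g (T z) (P z)). lra.
Qed.

Lemma ext_loc f g x l r : 0 < r -> (forall y, Rabs (y - x) < r -> f y = g y) -> dpl f x l -> dpl g x l.
Proof.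
  intros Hr He H eps Heps. destruct (H eps Heps) as [d Hd].
  assert (Hm : 0 < Rmin d r) by (apply Rmin_pos; [apply cond_pos|lra]).
  exists (mkposreal _ Hm). intros h Hh Hlt. simpl in Hlt.
  rewrite <- !He. apply Hd; auto. apply Rlt_le_trans with (1:=Hlt); apply Rmin_l.
  rewrite Rminus_diag, Rabs_R0; lra.
  replace (x+h-x) with h by ring. apply Rlt_le_trans with (1:=Hlt); apply Rmin_r.
Qed.

Lemma loc_x U t x f g a b : open2 U -> U t x -> (forall y, U t y -> f y = g y) ->
  dpl f x a -> dpl g x b -> a = b.
Proof.
  intros HU Ut He Hf Hg. destruct (HU t x Ut) as [r [Hr Hb]].
  eapply uniqueness_limite. 2: exact Hg. eapply ext_loc. exact Hr. 2: exact Hf.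
  intros y Hy. apply He. apply Hb; auto. rewrite Rminus_diag, Rabs_R0; lra.
Qed.

Lemma loc_x' U t x f g a : open2 U -> U t x -> (forall y, U t y -> f y = g y) ->
  dpl f x a -> dpl g x a.
Proof.
  intros HU Ut He Hf. destruct (HU t x Ut) as [r [Hr Hb]].
  eapply ext_loc. exact Hr. 2: exact Hf.
  intros y Hy. apply He. apply Hb; auto. rewrite Rminus_diag, Rabs_R0; lra.
Qed.

Lemma loc_t' U t x f g a : open2 U -> U t x -> (forall s, U s x -> f s = g s) ->
  dpl f t a -> dpl g t a.
Proof.
  intros HU Ut He Hf. destruct (HU t x Ut) as [r [Hr Hb]].
  eapply ext_loc. exact Hr. 2: exact Hf.
  intros y Hy. apply He. apply Hb; auto. rewrite Rminus_diag, Rabs_R0; lra.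
Qed.

Lemma schwarz U f ft fx ftx fxt t0 x0 : open2 U -> partial_t_on U f ft -> partial_x_on U f fx ->
  partial_x_on U ft ftx -> partial_t_on U fx fxt -> cont_on U ftx -> cont_on U fxt -> U t0 x0 ->
  ftx t0 x0 = fxt t0 x0.
Proof.
  intros HU Hft Hfx Hftx Hfxt C1 C2 Ut.
  destruct (HU t0 x0 Ut) as [r [Hr Hb]].
  destruct (Req_dec (ftx t0 x0) (fxt t0 x0)) as [E|NE]; auto. exfalso.
  set (eps := Rabs (ftx t0 x0 - fxt t0 x0) / 2).
  assert (Heps : 0 < eps) by (unfold eps; apply Rdiv_lt_0_compat; [apply Rabs_pos_lt; lra|lra]).
  destruct (C1 t0 x0 Ut eps Heps) as [d1 [Hd1 K1]].
  destruct (C2 t0 x0 Ut eps Heps) as [d2 [Hd2 K2]].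
  set (h := Rmin r (Rmin d1 d2) / 2).
  assert (Hm : 0 < Rmin r (Rmin d1 d2)) by (repeat apply Rmin_pos; auto).
  assert (Hh0 : 0 < h) by (unfold h; lra).
  assert (Hhr : h < r) by (unfold h; pose proof (Rmin_l r (Rmin d1 d2)); lra).
  assert (Hh1 : h < d1) by (unfold h; pose proof (Rmin_r r (Rmin d1 d2)); pose proof (Rmin_l d1 d2); lra).
  assert (Hh2 : h < d2) by (unfold h; pose proof (Rmin_r r (Rmin d1 d2)); pose proof (Rmin_r d1 d2); lra).
  assert (InU : forall s y, t0 <= s <= t0 + h -> x0 <= y <= x0 + h -> U s y).
  { intros s y Hs Hy. apply Hb; rewrite Rabs_right; lra. }
  destruct (MVT_cor2 (fun s => f s (x0+h) - f s x0) (fun s => ft s (x0+h) - ft s x0) t0 (t0+h))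
    as [s1 [E1 Hs1]]; [lra| |].
  { intros c Hc. apply D_minus; apply Hft; apply InU; lra. }
  destruct (MVT_cor2 (fun y => ft s1 y) (fun y => ftx s1 y) x0 (x0+h))
    as [y1 [E2 Hy1]]; [lra| |].
  { intros c Hc. apply Hftx; apply InU; lra. }
  destruct (MVT_cor2 (fun y => f (t0+h) y - f t0 y) (fun y => fx (t0+h) y - fx t0 y) x0 (x0+h))
    as [y2 [E3 Hy2]]; [lra| |].
  { intros c Hc. apply D_minus; apply Hfx; apply InU; lra. }
  destruct (MVT_cor2 (fun s => fx s y2) (fun s => fxt s y2) t0 (t0+h))
    as [s2 [E4 Hs2]]; [lra| |].
  { intros c Hc. apply Hfxt; apply InU; lra. }
  simpl in *.
  assert (Eq : ftx s1 y1 * h * h = fxt s2 y2 * h * h).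
  { replace (x0 + h - x0) with h in * by ring. replace (t0 + h - t0) with h in * by ring.
    rewrite E2 in E1. rewrite E4 in E3. lra. }
  assert (Eq2 : ftx s1 y1 = fxt s2 y2).
  { apply Rmult_eq_reg_r with h; [|lra]. apply Rmult_eq_reg_r with h; [|lra]. exact Eq. }
  assert (A1 : Rabs (ftx s1 y1 - ftx t0 x0) < eps) by (apply K1; rewrite Rabs_right; lra).
  assert (A2 : Rabs (fxt s2 y2 - fxt t0 x0) < eps) by (apply K2; rewrite Rabs_right; lra).
  rewrite Eq2 in A1.
  assert (Rabs (ftx t0 x0 - fxt t0 x0) <= Rabs (fxt s2 y2 - ftx t0 x0) + Rabs (fxt s2 y2 - fxt t0 x0)).
  { replace (ftx t0 x0 - fxt t0 x0) with ((fxt s2 y2 - fxt t0 x0) - (fxt s2 y2 - ftx t0 x0)) by ring.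
    eapply Rle_trans. apply Rabs_triang. rewrite Rabs_Ropp. lra. }
  unfold eps in *. lra.
Qed.

Lemma C2_facts U f g h : open2 U -> C2_on U f -> partial_t_on U f g -> partial_x_on U f h ->
  forall t x, U t x -> exists gx hx ht,
    dpl (fun y => g t y) x gx /\ dpl (fun y => h t y) x hx /\ dpl (fun s => h s x) t ht /\ gx = ht.
Proof.
  intros HU [ft [fx [ftt [ftx [fxt [fxx [H1 [H2 [H3 [H4 [H5 [H6 [_ [_ [_ [_ [C5 [C6 _]]]]]]]]]]]]]]]]]] Hg Hh t x Ut.
  assert (Eg : forall t x, U t x -> g t x = ft t x) by (intros; eapply uniqueness_limite; [apply Hg|apply H1]; auto).
  assert (Eh : forall t x, U t x -> h t x = fx t x) by (intros; eapply uniqueness_limite; [apply Hh|apply H2]; auto).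
  exists (ftx t x), (fxx t x), (fxt t x). split; [|split; [|split]].
  - apply (loc_x' U t x (fun y => ft t y)); [exact HU|exact Ut| |apply H4; auto].
    intros y Uy; symmetry; apply Eg; auto.
  - apply (loc_x' U t x (fun y => fx t y)); [exact HU|exact Ut| |apply H6; auto].
    intros y Uy; symmetry; apply Eh; auto.
  - apply (loc_t' U t x (fun s => fx s x)); [exact HU|exact Ut| |apply H5; auto].
    intros s Us; symmetry; apply Eh; auto.
  - apply (schwarz U f ft fx ftx fxt t x); auto.
Qed.

Theorem mainTheorem3
  (gamma : R) (U : R -> R -> Prop)
  (v tau p vt vx taut taux pt px : R -> R -> R) :
  1 < gamma ->
  open2 U ->
  C2_on U v -> C2_on U tau -> C2_on U p ->
  partial_t_on U v vt -> partial_x_on U v vx ->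
  partial_t_on U tau taut -> partial_x_on U tau taux ->
  partial_t_on U p pt -> partial_x_on U p px ->
  (forall t x, U t x -> 0 < tau t x /\ 0 < p t x) ->
  (forall t x, U t x ->
     vt t x + v t x * vx t x + tau t x * px t x = 0 /\
     taut t x + v t x * taux t x - tau t x * vx t x = 0 /\
     pt t x + v t x * px t x + gamma * p t x * vx t x = 0) ->
  let Q1 := fun t x => P1 gamma (tau t x) (p t x) (vx t x) (taux t x) (px t x) in
  let Q2 := fun t x => P2 gamma (tau t x) (p t x) (vx t x) (taux t x) (px t x) in
  let Q3 := fun t x => P3 gamma (tau t x) (p t x) (vx t x) (taux t x) (px t x) in
  forall t x, U t x ->
    (exists a b,
       derivable_pt_lim (fun s => Q1 s x) t a /\
       derivable_pt_lim (fun y => Q1 t y) x b /\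
       a + xi1 gamma (v t x) (tau t x) (p t x) * b
         = F1 gamma (Q1 t x) (Q2 t x) (Q3 t x)) /\
    (exists a b,
       derivable_pt_lim (fun s => Q2 s x) t a /\
       derivable_pt_lim (fun y => Q2 t y) x b /\
       a + xi2 gamma (v t x) (tau t x) (p t x) * b
         = F2 gamma (Q1 t x) (Q2 t x) (Q3 t x)) /\
    (exists a b,
       derivable_pt_lim (fun s => Q3 s x) t a /\
       derivable_pt_lim (fun y => Q3 t y) x b /\
       a + xi3 gamma (v t x) (tau t x) (p t x) * b
         = F3 gamma (Q1 t x) (Q2 t x) (Q3 t x)).
Proof.
  intros Hg HU C2v C2t C2p Hvt Hvx Htt Htx Hpt Hpx Hpos Hpde Q1 Q2 Q3 t x Ut.
  assert (Hg0 : 0 < gamma) by lra.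
  destruct (Hpos t x Ut) as [HT HP].
  assert (dVx : dpl (fun y => v t y) x (vx t x)) by (apply Hvx; auto).
  assert (dTx : dpl (fun y => tau t y) x (taux t x)) by (apply Htx; auto).
  assert (dPx : dpl (fun y => p t y) x (px t x)) by (apply Hpx; auto).
  destruct (C2_facts U v vt vx HU C2v Hvt Hvx t x Ut) as [vtx [vxx [vxt [dvt [dvxx [dvxt Ev]]]]]].
  destruct (C2_facts U tau taut taux HU C2t Htt Htx t x Ut) as [ttx [txx [txt [dtt [dtxx [dtxt Et]]]]]].
  destruct (C2_facts U p pt px HU C2p Hpt Hpx t x Ut) as [ptx [pxx [pxt [dpt [dpxx [dpxt Ep]]]]]].
  assert (E1 : vtx = 0 - (vx t x * vx t x + v t x * vxx + (taux t x * px t x + tau t x * pxx))).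
  { apply (loc_x U t x (fun y => vt t y) (fun y => 0 - (v t y * vx t y + tau t y * px t y))); auto.
    - intros y Uy. destruct (Hpde t y Uy) as [A _]. lra.
    - eapply D_eq. apply D_minus. apply D_const. apply D_plus; apply D_mult; try eassumption.
      reflexivity. }
  assert (E2 : ttx = taux t x * vx t x + tau t x * vxx - (vx t x * taux t x + v t x * txx)).
  { apply (loc_x U t x (fun y => taut t y) (fun y => tau t y * vx t y - v t y * taux t y)); auto.
    - intros y Uy. destruct (Hpde t y Uy) as [_ [A _]]. lra.
    - eapply D_eq. apply D_minus; apply D_mult; eassumption.
      reflexivity. }
  assert (E3 : ptx = 0 - (vx t x * px t x + v t x * pxx + ((0 * p t x + gamma * px t x) * vx t x + gamma * p t x * vxx))).
  { apply (loc_x U t x (fun y => pt t y) (fun y => 0 - (v t y * px t y + gamma * p t y * vx t y))); auto.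
    - intros y Uy. destruct (Hpde t y Uy) as [_ [_ A]]. lra.
    - eapply D_eq. apply D_minus. apply D_const. apply D_plus; apply D_mult; try eassumption.
      apply D_mult; try eassumption. apply D_const. reflexivity. }
  destruct (Hpde t x Ut) as [_ [Et' Ep']].
  assert (Ett : taut t x = tau t x * vx t x - v t x * taux t x) by lra.
  assert (Ept : pt t x = 0 - (v t x * px t x + gamma * p t x * vx t x)) by lra.
  set (S := sfun gamma (tau t x) (p t x)).
  assert (HS : 0 < S) by (apply S_pos; auto).
  assert (HS2 : S * S = gamma * p t x / tau t x).
  { unfold S, sfun. apply sqrt_sqrt. apply Rlt_le, Rdiv_lt_0_compat; auto. apply Rmult_lt_0_compat; auto. }
  assert (Hc : sqrt (gamma * p t x * tau t x) = S * tau t x).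
  { unfold S, sfun. replace (gamma * p t x * tau t x) with (gamma * p t x / tau t x * (tau t x * tau t x)) by (field; lra).
    rewrite sqrt_mult. rewrite sqrt_square. reflexivity. lra.
    apply Rlt_le, Rdiv_lt_0_compat; auto. apply Rmult_lt_0_compat; auto.
    apply Rlt_le, Rmult_lt_0_compat; auto. }
  assert (HPe : p t x = S * S * tau t x / gamma) by (rewrite HS2; field; lra).
  assert (dT : dpl (fun s => tau s x) t (taut t x)) by (apply Htt; auto).
  assert (dP : dpl (fun s => p s x) t (pt t x)) by (apply Hpt; auto).
  pose proof (dQ gamma (fun s => tau s x) (fun s => p s x) (fun s => px s x) _ _ _ t Hg0 HT HP dT dP dpxt) as q1.
  pose proof (dQ gamma (fun y => tau t y) (fun y => p t y) (fun y => px t y) _ _ _ x Hg0 HT HP dTx dPx dpxx) as q2.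
  pose proof (dS gamma (fun s => tau s x) (fun s => p s x) _ _ t Hg0 HT HP dT dP) as s1.
  pose proof (dS gamma (fun y => tau t y) (fun y => p t y) _ _ x Hg0 HT HP dTx dPx) as s2.
  simpl in q1, q2, s1, s2. fold S in q1, q2, s1, s2.
  split; [|split].
  - eexists; eexists; split; [|split].
    + unfold Q1, P1. apply D_minus. exact dvxt. exact q1.
    + unfold Q1, P1. apply D_minus. exact dvxx. exact q2.
    + unfold Q1, Q2, Q3, P1, P2, P3, F1, xi1, Sd. fold S. rewrite Hc.
      rewrite <- Ev, <- Ep, E1, E3, Ett, Ept. clearbody S. rewrite HPe.
      field. lra.
  - eexists; eexists; split; [|split].
    + unfold Q2, P2. apply D_plus. apply D_mult. exact s1. exact dtxt. exact q1.
    + unfold Q2, P2. apply D_plus. apply D_mult. exact s2. exact dtxx. exact q2.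
    + unfold Q1, Q2, Q3, P1, P2, P3, F2, xi2, Sd. fold S.
      rewrite <- Et, <- Ep, E2, E3, Ett, Ept. clearbody S. rewrite HPe.
      field. lra.
  - eexists; eexists; split; [|split].
    + unfold Q3, P3. apply D_plus. exact dvxt. exact q1.
    + unfold Q3, P3. apply D_plus. exact dvxx. exact q2.
    + unfold Q1, Q2, Q3, P1, P2, P3, F3, xi3, Sd. fold S. rewrite Hc.
      rewrite <- Ev, <- Ep, E1, E3, Ett, Ept. clearbody S. rewrite HPe.
      field. lra.
Qed.
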